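(* For all integers $u\ge5$, $$9\,T_{24}^{(3\cdot 2^u)}\equiv T_0+2^{u-3}T_1\pmod{2^u},$$ where $T_0=\mathrm{Toepl}\big((0,0,0,0,0,0,0,0,1,0,0,0,0,0,0,0,2,0,0,0,0,0,0,0),\,(0,0,0,0,0,0,0,-1,0,0,0,0,0,0,0,-2,0,0,0,0,0,0,0)\big)$ and $T_1=\mathrm{Toepl}\big((3,0,0,0,4,0,0,0,3,0,4,0,6,0,4,0,4,0,4,0,6,0,4,0),\,(0,0,0,4,0,0,0,2,0,4,0,2,0,4,0,1,0,4,0,2,0,4,0)\big)$.
   Context: For integers $k,i\ge0$, $T_k^{(i)}$ is the $k\times k$ integer matrix $\big(\sum_{\alpha\in\mathbb{Z}}\alpha\binom{i}{\alpha k+r-s}\big)_{1\le r,s\le k}$, with $\binom{a}{b}=0$ if $b<0$ or $b>a$. For a $k$-tuple $S_1=(u_0,u_1,\dots,u_{k-1})$ and a $(k-1)$-tuple $S_2=(u_{-1},u_{-2},\dots,u_{-(k-1)})$, $\mathrm{Toepl}(S_1,S_2)$ is the $k\times k$ matrix whose $(r,s)$ entry is $u_{r-s}$. Congruence of matrices is entrywise. *)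

(* Defs.v *)
From mathcomp Require Import all_boot all_order all_algebra.
Set Implicit Arguments. Unset Strict Implicit. Unset Printing Implicit Defensive.
Import Order.TTheory GRing.Theory Num.Theory.
Local Open Scope ring_scope.

Definition binz (a : nat) (b : int) : int :=
  if (b < 0)%R then 0 else ('C(a, `|b|%N))%:Z.

(* T_k^(i)(r,s) = sum_{alpha in Z} alpha * binom(i, alpha*k + r - s).
   Only alpha with 0 <= alpha*k + r - s <= i contribute; for |r - s| < k this
   forces |alpha| <= i + 1, so the sum over alpha in [-(i+1), i+1] is the
   full sum over Z. *)
Definition Tmat (k i : nat) : 'M[int]_k :=
  \matrix_(r < k, s < k)
    \sum_(0 <= t < (i + 1).*2.+1)
      let alpha : int := t%:Z - (i + 1)%:Z in
      alpha * binz i (alpha * k%:Z + r%:Z - s%:Z).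

(* Toepl(S1, S2)(r,s) = u_{r-s}, with S1 = (u_0,...,u_{k-1}),
   S2 = (u_{-1},...,u_{-(k-1)}). *)
Definition Toepl (k : nat) (S1 S2 : seq int) : 'M[int]_k :=
  \matrix_(r < k, s < k)
    if (s <= r)%N then nth 0 S1 (r - s) else nth 0 S2 (s - r).-1.

Definition mx_congr (k : nat) (m : int) (A B : 'M[int]_k) : Prop :=
  forall r s, (A r s = B r s %[mod m])%Z.

Definition T0 : 'M[int]_24 :=
  Toepl 24 [:: 0;0;0;0;0;0;0;0;1;0;0;0;0;0;0;0;2;0;0;0;0;0;0;0]
           [:: 0;0;0;0;0;0;0;-1;0;0;0;0;0;0;0;-2;0;0;0;0;0;0;0].

Definition T1 : 'M[int]_24 :=
  Toepl 24 [:: 3;0;0;0;4;0;0;0;3;0;4;0;6;0;4;0;4;0;4;0;6;0;4;0]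
           [:: 0;0;0;4;0;0;0;2;0;4;0;2;0;4;0;1;0;4;0;2;0;4;0].

(* Main.v *)
Require Import Defs.
From mathcomp Require Import all_boot all_order all_algebra.
From mathcomp Require Import zify ring.
Set Implicit Arguments. Unset Strict Implicit. Unset Printing Implicit Defensive.
Import Order.TTheory GRing.Theory Num.Theory.
Local Open Scope ring_scope.


Definition S (n : nat) (f : nat -> int) : int :=
  \sum_(m < n.+1) f m * ('C(n, m))%:Z.

Lemma S_ext n f g : (forall m, (m <= n)%N -> f m = g m) -> S n f = S n g.
Proof. move=> H; apply: eq_bigr => i _; by rewrite H // -ltnS. Qed.

Lemma S_add n f g : S n (fun m => f m + g m) = S n f + S n g.
Proof. by rewrite /S -big_split; apply: eq_bigr => i _; rewrite mulrDl. Qed.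

Lemma S_scale n c f : S n (fun m => c * f m) = c * S n f.
Proof. by rewrite /S mulr_sumr; apply: eq_bigr => i _; rewrite mulrA. Qed.

Lemma S_scaler n c f : S n (fun m => f m * c) = S n f * c.
Proof. by rewrite /S mulr_suml; apply: eq_bigr => i _; rewrite -!mulrA (mulrC c). Qed.

Lemma S_sum n k (F : 'I_k -> nat -> int) :
  S n (fun m => \sum_(e < k) F e m) = \sum_(e < k) S n (F e).
Proof.
rewrite /S exchange_big /=; apply: eq_bigr => i _; by rewrite mulr_suml.
Qed.

Lemma S_pascal n f : S n.+1 f = S n f + S n (fun m => f m.+1).
Proof.
rewrite /S big_ord_recl /= bin0.
under eq_bigr => i _ do rewrite /bump /= add1n binS PoszD mulrDr.
rewrite big_split /= addrA; congr (_ + _).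
rewrite [RHS]big_ord_recl /= bin0 big_ord_recr /= bin_small // mulr0 addr0.
by [].
Qed.

Lemma S_prod a b f : S (a + b) f = S a (fun j => S b (fun k => f (j + k)%N)).
Proof.
elim: b f => [|b IH] f.
  rewrite addn0; apply: S_ext => m _.
  by rewrite /S big_ord_recl big_ord0 bin0 addn0 mulr1 addr0.
rewrite addnS S_pascal !IH -S_add; apply: S_ext => j _.
by rewrite S_pascal; congr (_ + _); apply: S_ext => k _; rewrite addnS.
Qed.


Definition ind (b : bool) : int := if b then 1 else 0.
Definition Gf n d := S n (fun m => ind (m %% 24 == d)%N).
Definition Ff n d := S n (fun m => ind (m %% 24 == d)%N * (m %/ 24)%:Z).
Definition dm (d e : nat) : nat := ((d + 24 - e) %% 24)%N.

Lemma sum_ind k x (X : nat -> int) : (x < k)%N ->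
  \sum_(e < k) ind (x == e) * X e = X x.
Proof.
move=> hx; rewrite (bigD1 (Ordinal hx)) //= eqxx mul1r big1 ?addr0 // => i hi.
suff -> : (x == i) = false by rewrite mul0r.
by apply/negbTE; apply: contra hi => /eqP h; apply/eqP/val_inj; rewrite /= h.
Qed.

Lemma ptG j k d : (d < 24)%N ->
  ind ((j + k) %% 24 == d)%N = \sum_(e < 24) ind (j %% 24 == e)%N * ind (k %% 24 == dm d e)%N.
Proof.
move=> hd; rewrite (sum_ind (fun e => ind (k %% 24 == dm d e)%N)) ?ltn_pmod //.
congr ind; rewrite /dm; apply/eqP/eqP; lia.
Qed.

Lemma ptF j k d : (d < 24)%N ->
  ind ((j + k) %% 24 == d)%N * ((j + k) %/ 24)%:Z =
  \sum_(e < 24) ind (j %% 24 == e)%N *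
     (ind (k %% 24 == dm d e)%N * ((j %/ 24)%:Z + (k %/ 24)%:Z + ind (d < e)%N)).
Proof.
move=> hd; rewrite (sum_ind (fun e => ind (k %% 24 == dm d e)%N *
  ((j %/ 24)%:Z + (k %/ 24)%:Z + ind (d < e)%N))) ?ltn_pmod //.
have -> : ((j + k) %% 24 == d)%N = (k %% 24 == dm d (j %% 24))%N.
  rewrite /dm; apply/eqP/eqP; lia.
case: eqP => h; rewrite /ind ?mul0r // !mul1r.
have -> : ((j + k) %/ 24 = j %/ 24 + k %/ 24 + (d < j %% 24))%N.
  move: h; rewrite /dm; case: ltnP => /= H h; lia.
by rewrite !PoszD; case: ltnP.
Qed.

Lemma dblG n d : (d < 24)%N -> Gf (n + n) d = \sum_(e < 24) Gf n e * Gf n (dm d e).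
Proof.
move=> hd; rewrite /Gf S_prod.
rewrite (S_ext (g := fun j => \sum_(e < 24) ind (j %% 24 == e)%N * Gf n (dm d e))).
  rewrite S_sum; apply: eq_bigr => e _; by rewrite S_scaler.
move=> j _; rewrite (S_ext (g := fun k => \sum_(e < 24) ind (j %% 24 == e)%N * ind (k %% 24 == dm d e)%N)).
  rewrite S_sum; apply: eq_bigr => e _; by rewrite S_scale.
by move=> k _; apply: ptG.
Qed.

Lemma dblF n d : (d < 24)%N -> Ff (n + n) d =
  \sum_(e < 24) (Ff n e * Gf n (dm d e) + Gf n e * Ff n (dm d e)
                 + ind (d < e)%N * Gf n e * Gf n (dm d e)).
Proof.
move=> hd; rewrite /Ff S_prod.
rewrite (S_ext (g := fun j => \sum_(e < 24) ind (j %% 24 == e)%N *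
    ((j %/ 24)%:Z * Gf n (dm d e) + Ff n (dm d e) + ind (d < e)%N * Gf n (dm d e)))).
  rewrite S_sum; apply: eq_bigr => e _.
  rewrite (S_ext (g := fun j => ind (j %% 24 == e)%N * (j %/ 24)%:Z * Gf n (dm d e)
       + ind (j %% 24 == e)%N * Ff n (dm d e) + ind (j %% 24 == e)%N * (ind (d < e)%N * Gf n (dm d e)))).
    rewrite !S_add !S_scaler -/(Gf n e) -/(Ff n e). rewrite /Gf /Ff; ring.
  by move=> j _; ring.
move=> j _; rewrite (S_ext (g := fun k => \sum_(e < 24) ind (j %% 24 == e)%N *
     (ind (k %% 24 == dm d e)%N * ((j %/ 24)%:Z + (k %/ 24)%:Z + ind (d < e)%N)))).
  rewrite S_sum; apply: eq_bigr => e _; rewrite S_scale; congr (_ * _).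
  rewrite (S_ext (g := fun k => (j %/ 24)%:Z * ind (k %% 24 == dm d e)%N
      + ind (k %% 24 == dm d e)%N * (k %/ 24)%:Z + ind (d < e)%N * ind (k %% 24 == dm d e)%N)).
    by rewrite !S_add !S_scale.
  by move=> k _; ring.
by move=> k _; apply: ptF.
Qed.


Lemma sum_ind0 k x (X : nat -> int) : (k <= x)%N ->
  \sum_(e < k) ind (x == e) * X e = 0.
Proof.
move=> hx; rewrite big1 // => i _.
suff -> : (x == i) = false by rewrite mul0r.
apply/negbTE; apply/eqP => h; move: (ltn_ord i); rewrite -h; lia.
Qed.

Lemma binzE i b : binz i b = \sum_(m < i.+1) ind (b == m%:Z) * ('C(i, m))%:Z.
Proof.
rewrite /binz; case: ltP => hb.
  rewrite big1 // => m _; suff -> : (b == m%:Z) = false by rewrite mul0r.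
  by apply/negbTE; apply/eqP => h; move: hb; rewrite h.
have hb' : b = (`|b|%N)%:Z by lia.
rewrite (eq_bigr (fun m : 'I_i.+1 => ind (`|b|%N == m) * ('C(i, m))%:Z)); last first.
  by move=> m _; rewrite {1}hb' eqz_nat.
case: (ltnP `|b|%N i.+1) => h.
  by rewrite (sum_ind (fun m => ('C(i, m))%:Z)).
by rewrite (sum_ind0 (fun m => ('C(i, m))%:Z)) // bin_small.
Qed.

Lemma eq_alpha (t m r s i : nat) : (m <= i)%N -> (r < 24)%N -> (s < 24)%N ->
  ((t%:Z - (i + 1)%:Z) * 24%:Z + r%:Z - s%:Z == m%:Z) =
  ((m %/ 24 + (r < s) + i + 1)%N == t) && (m %% 24 == (r + 24 - s) %% 24)%N.
Proof.
move=> hm hr hs; case: ltnP => H /=.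
  apply/eqP/andP => [h|[/eqP h1 /eqP h2]]; [split; apply/eqP|]; lia.
apply/eqP/andP => [h|[/eqP h1 /eqP h2]]; [split; apply/eqP|]; lia.
Qed.

Lemma Tmat_entry i (r s : 'I_24) :
  Tmat 24 i r s = Ff i ((r + 24 - s) %% 24)%N + ind (r < s)%N * Gf i ((r + 24 - s) %% 24)%N.
Proof.
rewrite /Tmat mxE big_mkord.
under eq_bigr => t _ do rewrite binzE mulr_sumr.
rewrite exchange_big /=.
rewrite /Ff /Gf -S_scale -S_add /S; apply: eq_bigr => m _.
have hm : (m <= i)%N by rewrite -ltnS.
under eq_bigr => t _ do rewrite (eq_alpha _ hm (ltn_ord r) (ltn_ord s)).
set c := (m %% 24 == (r + 24 - s) %% 24)%N.
set t0 := (m %/ 24 + (r < s) + i + 1)%N.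
have ht0 : (t0 < (i + 1).*2.+1)%N.
  rewrite /t0; have : (m %/ 24 <= i)%N by apply: leq_trans (leq_div _ _) hm.
  case: (r < s)%N => /=; lia.
rewrite (eq_bigr (fun t : 'I_(i + 1).*2.+1 => ind (t0 == t) * ((t%:Z - (i + 1)%:Z) * ind c * ('C(i, m))%:Z))); last first.
  by move=> t _; rewrite /ind; case: (t0 == t); case: c => /=; ring.
rewrite (sum_ind (fun t => ((t%:Z - (i + 1)%:Z) * ind c * ('C(i, m))%:Z))) //.
rewrite /t0 /ind; case: c; case: (r < s)%N => /=; rewrite ?PoszD; ring.
Qed.


Definition g0L : seq int := [:: 2;0;0;0;0;0;0;0;-1;0;0;0;0;0;0;0;-1;0;0;0;0;0;0;0].
Definition g1L : seq int := [:: 6;4;2;4;1;4;6;4;1;0;0;0;6;0;0;0;1;4;6;4;1;4;2;4].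
Definition AL : seq int := [:: 0;0;0;0;0;0;0;0;1;0;0;0;0;0;0;0;2;0;0;0;0;0;0;0].
Definition BL : seq int := [:: 3;0;0;0;4;0;0;0;3;0;4;0;6;0;4;0;4;0;4;0;6;0;4;0].
Definition A2L : seq int := [:: 0;0;0;0;0;0;0;-1;0;0;0;0;0;0;0;-2;0;0;0;0;0;0;0].
Definition B2L : seq int := [:: 0;0;0;4;0;0;0;2;0;4;0;2;0;4;0;1;0;4;0;2;0;4;0].
Definition g0 d := nth 0 g0L d.
Definition g1 d := nth 0 g1L d.
Definition Af d := nth 0 AL d.
Definition Bf d := nth 0 BL d.

Definition sumL (F : nat -> int) := foldr (fun e acc => F e + acc) 0 (iota 0 24).

Lemma sumLE (F : nat -> int) : \sum_(e < 24) F e = sumL F.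
Proof.
rewrite /sumL -(big_mkord xpredT F) /index_iota subn0.
elim: (iota 0 24) => [|a l IH]; by rewrite ?big_nil ?big_cons ?IH.
Qed.

Definition chkG d :=
  [&& sumL (fun e => g0 e * g0 (dm d e)) == 3 * g0 d,
      (16 %| sumL (fun e => g0 e * g1 (dm d e) + g1 e * g0 (dm d e)) - 6 * g1 d)%Z &
      (2 %| sumL (fun e => g1 e * g1 (dm d e)))%Z].

Lemma chkG_ok : all chkG (iota 0 24).
Proof. vm_compute. reflexivity. Qed.

Definition chkF d :=
  [&& sumL (fun e => Af e * g0 (dm d e) + g0 e * Af (dm d e) + 3 * ind (d < e)%N * (g0 e * g0 (dm d e))) == 3 * Af d,
      (16 %| sumL (fun e => 2 * Af e * g1 (dm d e) + Bf e * g0 (dm d e) + 2 * g1 e * Af (dm d e) + g0 e * Bf (dm d e)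
                 + 6 * ind (d < e)%N * (g0 e * g1 (dm d e) + g1 e * g0 (dm d e))) - 6 * Bf d)%Z &
      (2 %| sumL (fun e => Bf e * g1 (dm d e) + g1 e * Bf (dm d e) + 6 * ind (d < e)%N * (g1 e * g1 (dm d e))))%Z].

Lemma chkF_ok : all chkF (iota 0 24).
Proof. vm_compute. reflexivity. Qed.

Definition chkN d := (d == 0)%N ||
  ((nth 0 A2L (23 - d) == Af d + 3 * g0 d) && (8 %| nth 0 B2L (23 - d) - Bf d - 6 * g1 d)%Z).

Lemma chkN_ok : all chkN (iota 0 24).
Proof. vm_compute. reflexivity. Qed.

Definition x0 : seq int := [:: 1;3;3;1;0;0;0;0;0;0;0;0;0;0;0;0;0;0;0;0;0;0;0;0].
Definition y0 : seq int := nseq 24 0.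
Definition nxtG (x : seq int) : seq int :=
  [seq ((sumL (fun e => x`_e * x`_(dm d e))) %% 64)%Z | d <- iota 0 24].
Definition nxtF (x y : seq int) : seq int :=
  [seq ((sumL (fun e => y`_e * x`_(dm d e) + x`_e * y`_(dm d e)
        + ind (d < e)%N * x`_e * x`_(dm d e))) %% 64)%Z | d <- iota 0 24].
Definition tab (j : nat) : seq int * seq int :=
  iter j (fun q => (nxtG q.1, nxtF q.1 q.2)) (x0, y0).

Definition chkB (t : seq int * seq int) d :=
  (64 %| 3 * t.1`_d - (g0 d + 8 * g1 d))%Z && (32 %| 9 * t.2`_d - (Af d + 4 * Bf d))%Z.

Lemma chkB_ok : let t := tab 5 in all (chkB t) (iota 0 24).
Proof. Time vm_compute. reflexivity. Qed.


Lemma dm_lt d e : (dm d e < 24)%N.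
Proof. by rewrite /dm ltn_pmod. Qed.

Lemma dm_inv d e : (d < 24)%N -> (e < 24)%N -> dm d (dm d e) = e.
Proof. rewrite /dm => hd he; lia. Qed.

Lemma reidx d (f : nat -> nat -> int) : (d < 24)%N ->
  \sum_(e < 24) f e (dm d e) = \sum_(e < 24) f (dm d e) e.
Proof.
move=> hd.
pose sg (e : 'I_24) : 'I_24 := Ordinal (dm_lt d e).
have sgK : involutive sg by move=> e; apply: val_inj; rewrite /= dm_inv.
rewrite (reindex_inj (inv_inj sgK)) /=; apply: eq_bigr => e _.
by rewrite dm_inv.
Qed.

Lemma symG (X h : nat -> int) (M : int) d : (d < 24)%N -> (2 * M %| M * M)%Z ->
  (forall e, (e < 24)%N -> (M %| X e - h e)%Z) ->
  (2 * M %| \sum_(e < 24) X e * X (dm d e) - \sum_(e < 24) h e * h (dm d e))%Z.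
Proof.
move=> hd hM H.
have E : \sum_(e < 24) X e * X (dm d e) - \sum_(e < 24) h e * h (dm d e) =
   \sum_(e < 24) (X e - h e) * (2 * h (dm d e) + (X (dm d e) - h (dm d e))).
  rewrite [RHS](eq_bigr (fun e : 'I_24 => (X e - h e) * X (dm d e) + h (dm d e) * (X e - h e))); last first.
    by move=> e _; ring.
  rewrite big_split /= (reidx (fun a b => h b * (X a - h a))) // -sumrB -big_split /=.
  by apply: eq_bigr => e _; ring.
rewrite E; apply: rpred_sum => e _; rewrite mulrDr; apply: rpredD.
  by rewrite mulrC; apply: dvdz_mul; [apply: dvdz_mulr | apply: H].
apply: dvdz_trans hM _; apply: dvdz_mul; apply: H => //; exact: dm_lt.
Qed.

Lemma symF (X h Y a : nat -> int) (M : int) d : (d < 24)%N ->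
  (forall e, (e < 24)%N -> (M %| Y e - a e)%Z) ->
  (forall e, (e < 24)%N -> (2 * M %| X e - h e)%Z) ->
  (2 * M %| \sum_(e < 24) (Y e * X (dm d e) + X e * Y (dm d e))
          - \sum_(e < 24) (a e * h (dm d e) + h e * a (dm d e)))%Z.
Proof.
move=> hd HY HX.
have E : \sum_(e < 24) (Y e * X (dm d e) + X e * Y (dm d e))
          - \sum_(e < 24) (a e * h (dm d e) + h e * a (dm d e)) =
   \sum_(e < 24) ((2 * h (dm d e)) * (Y e - a e) + ((Y e - a e) * (X (dm d e) - h (dm d e))
        + (a e * (X (dm d e) - h (dm d e)) + (X e - h e) * Y (dm d e)))).
  rewrite [RHS](eq_bigr (fun e : 'I_24 => ((Y e - a e) * X (dm d e) + a e * (X (dm d e) - h (dm d e))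
        + (X e - h e) * Y (dm d e)) + (Y e - a e) * h (dm d e))); last first.
    by move=> e _; ring.
  rewrite [RHS]big_split /= (reidx (fun x y => (Y x - a x) * h y)) // -sumrB -big_split /=.
  by apply: eq_bigr => e _; ring.
have he' e : (dm d e < 24)%N by exact: dm_lt.
rewrite E; apply: rpred_sum => e _.
apply: rpredD; [|apply: rpredD; [|apply: rpredD]].
- by apply: dvdz_mul; [apply: dvdz_mulr | apply: HY].
- apply: (@dvdz_trans (M * (2 * M))); first by apply: dvdz_mull.
  by apply: dvdz_mul; [apply: HY | apply: HX].
- by apply: dvdz_mull; apply: HX.
- by apply: dvdz_mulr; apply: HX.
Qed.


Definition P w : int := 2 ^+ w.
Definition InvG w n := forall d, (d < 24)%N ->
  (64 * P w %| 3 * Gf n d - (g0 d + 8 * P w * g1 d))%Z.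
Definition InvF w n := forall d, (d < 24)%N ->
  (32 * P w %| 9 * Ff n d - (Af d + 4 * P w * Bf d))%Z.

Lemma cop3 k w : coprimez (2 ^+ k * P w) 3.
Proof. by rewrite /P -exprD; apply: coprimezXl. Qed.

Lemma iota24 d : (d < 24)%N -> d \in iota 0 24.
Proof. by move=> hd; rewrite mem_iota add0n hd. Qed.

Lemma stepG w n : InvG w n -> InvG w.+1 (n + n).
Proof.
move=> H d hd; rewrite /InvG.
have hP : P w.+1 = 2 * P w by rewrite /P exprS.
rewrite hP; set p := P w.
have -> : 64 * (2 * p) = 2 ^+ 7 * p by rewrite /p; ring.
rewrite -(Gauss_dvdzr _ (cop3 7 w)) -/p.
have /and3P [c1 c2 c3] := allP chkG_ok d (iota24 hd).
have E27 : 9 * Gf (n + n) d = \sum_(e < 24) (3 * Gf n e) * (3 * Gf n (dm d e)).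
  by rewrite dblG // mulr_sumr; apply: eq_bigr => e _; ring.
have E2 : \sum_(e < 24) (g0 e + 8 * p * g1 e) * (g0 (dm d e) + 8 * p * g1 (dm d e)) =
   \sum_(e < 24) g0 e * g0 (dm d e)
   + 8 * p * \sum_(e < 24) (g0 e * g1 (dm d e) + g1 e * g0 (dm d e))
   + 64 * p * p * \sum_(e < 24) g1 e * g1 (dm d e).
  by rewrite !mulr_sumr -!big_split; apply: eq_bigr => e _ /=; ring.
have -> : 3 * (3 * Gf (n + n) d - (g0 d + 8 * (2 * p) * g1 d)) =
   (\sum_(e < 24) (3 * Gf n e) * (3 * Gf n (dm d e))
      - \sum_(e < 24) (g0 e + 8 * p * g1 e) * (g0 (dm d e) + 8 * p * g1 (dm d e)))
   + (\sum_(e < 24) (g0 e + 8 * p * g1 e) * (g0 (dm d e) + 8 * p * g1 (dm d e))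
      - 3 * (g0 d + 16 * p * g1 d)).
  have -> : 3 * (3 * Gf (n + n) d - (g0 d + 8 * (2 * p) * g1 d)) =
     9 * Gf (n + n) d - 3 * (g0 d + 16 * p * g1 d) by ring.
  by rewrite E27; ring.
apply: rpredD.
  have -> : 2 ^+ 7 * p = 2 * (64 * p) by ring.
  apply: (symG (X := fun e => 3 * Gf n e) (h := fun e => g0 e + 8 * p * g1 e)) => //.
  have -> : 64 * p * (64 * p) = 2 * (64 * p) * (32 * p) by ring.
  exact: dvdz_mulr (dvdzz _).
rewrite E2.
rewrite (sumLE (fun e => g0 e * g0 (dm d e))) (eqP c1).
rewrite (sumLE (fun e => g0 e * g1 (dm d e) + g1 e * g0 (dm d e))).
rewrite (sumLE (fun e => g1 e * g1 (dm d e))).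
set s2 := sumL _ ; set s3 := sumL _.
have -> : 3 * g0 d + 8 * p * s2 + 64 * p * p * s3 - 3 * (g0 d + 16 * p * g1 d) =
   8 * p * (s2 - 6 * g1 d) + 64 * p * (p * s3) by ring.
apply: rpredD.
  have -> : 2 ^+ 7 * p = 8 * p * 16 by ring.
  exact: dvdz_mul (dvdzz _) c2.
have -> : 2 ^+ 7 * p = 64 * p * 2 by ring.
exact: dvdz_mul (dvdzz _) (dvdz_mull _ c3).
Qed.

Lemma stepF w n : InvG w n -> InvF w n -> InvF w.+1 (n + n).
Proof.
move=> HG HF d hd; rewrite /InvF.
have hP : P w.+1 = 2 * P w by rewrite /P exprS.
rewrite hP; set p := P w.
have -> : 32 * (2 * p) = 2 ^+ 6 * p by rewrite /p; ring.
rewrite -(Gauss_dvdzr _ (cop3 6 w)) -/p.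
have /and3P [c1 c2 c3] := allP chkF_ok d (iota24 hd).
pose X e := 3 * Gf n e.
pose Y e := 9 * Ff n e.
pose h e := g0 e + 8 * p * g1 e.
pose a e := Af e + 4 * p * Bf e.
pose c e := ind (d < e)%N.
have E27 : 27 * Ff (n + n) d = \sum_(e < 24) (Y e * X (dm d e) + X e * Y (dm d e))
   + \sum_(e < 24) 3 * c e * (X e * X (dm d e) - h e * h (dm d e))
   + \sum_(e < 24) 3 * c e * (h e * h (dm d e)).
  rewrite -!big_split dblF // mulr_sumr; apply: eq_bigr => e _ /=.
  rewrite /X /Y /c; ring.
have E2 : \sum_(e < 24) (a e * h (dm d e) + h e * a (dm d e)) + \sum_(e < 24) 3 * c e * (h e * h (dm d e)) =
   \sum_(e < 24) (Af e * g0 (dm d e) + g0 e * Af (dm d e) + 3 * ind (d < e)%N * (g0 e * g0 (dm d e)))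
   + 4 * p * \sum_(e < 24) (2 * Af e * g1 (dm d e) + Bf e * g0 (dm d e) + 2 * g1 e * Af (dm d e) + g0 e * Bf (dm d e)
                 + 6 * ind (d < e)%N * (g0 e * g1 (dm d e) + g1 e * g0 (dm d e)))
   + 32 * p * p * \sum_(e < 24) (Bf e * g1 (dm d e) + g1 e * Bf (dm d e) + 6 * ind (d < e)%N * (g1 e * g1 (dm d e))).
  by rewrite !mulr_sumr -!big_split; apply: eq_bigr => e _ /=; rewrite /a /h /c; ring.
have -> : 3 * (9 * Ff (n + n) d - (Af d + 4 * (2 * p) * Bf d)) =
   (\sum_(e < 24) (Y e * X (dm d e) + X e * Y (dm d e))
      - \sum_(e < 24) (a e * h (dm d e) + h e * a (dm d e)))
   + \sum_(e < 24) 3 * c e * (X e * X (dm d e) - h e * h (dm d e))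
   + ((\sum_(e < 24) (a e * h (dm d e) + h e * a (dm d e)) + \sum_(e < 24) 3 * c e * (h e * h (dm d e)))
      - 3 * (Af d + 8 * p * Bf d)).
  have -> : 3 * (9 * Ff (n + n) d - (Af d + 4 * (2 * p) * Bf d)) =
     27 * Ff (n + n) d - 3 * (Af d + 8 * p * Bf d) by ring.
  by rewrite E27; ring.
have HG' e : (e < 24)%N -> (2 * (32 * p) %| X e - h e)%Z.
  by move=> he; rewrite (_ : 2 * (32 * p) = 64 * p); [exact: HG | ring].
apply: rpredD; first apply: rpredD.
- have -> : 2 ^+ 6 * p = 2 * (32 * p) by ring.
  exact: (symF (X := X) (h := h) (Y := Y) (a := a)).
- apply: rpred_sum => e _.
  have -> : 3 * c e * (X e * X (dm d e) - h e * h (dm d e)) =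
     3 * c e * ((X e - h e) * X (dm d e) + h e * (X (dm d e) - h (dm d e))) by ring.
  apply: dvdz_mull; apply: rpredD.
    by apply: dvdz_mulr; rewrite (_ : 2 ^+ 6 * p = 2 * (32 * p)); [apply: HG' | ring].
  by apply: dvdz_mull; rewrite (_ : 2 ^+ 6 * p = 2 * (32 * p)); [apply: HG'; exact: dm_lt | ring].
rewrite E2.
rewrite (sumLE (fun e => Af e * g0 (dm d e) + g0 e * Af (dm d e) + 3 * ind (d < e)%N * (g0 e * g0 (dm d e)))) (eqP c1).
rewrite (sumLE (fun e => 2 * Af e * g1 (dm d e) + Bf e * g0 (dm d e) + 2 * g1 e * Af (dm d e) + g0 e * Bf (dm d e)
                 + 6 * ind (d < e)%N * (g0 e * g1 (dm d e) + g1 e * g0 (dm d e)))).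
rewrite (sumLE (fun e => Bf e * g1 (dm d e) + g1 e * Bf (dm d e) + 6 * ind (d < e)%N * (g1 e * g1 (dm d e)))).
set s2 := sumL _ ; set s3 := sumL _.
have -> : 3 * Af d + 4 * p * s2 + 32 * p * p * s3 - 3 * (Af d + 8 * p * Bf d) =
   4 * p * (s2 - 6 * Bf d) + 32 * p * (p * s3) by ring.
apply: rpredD.
  have -> : 2 ^+ 6 * p = 4 * p * 16 by ring.
  exact: dvdz_mul (dvdzz _) c2.
have -> : 2 ^+ 6 * p = 32 * p * 2 by ring.
exact: dvdz_mul (dvdzz _) (dvdz_mull _ c3).
Qed.


Lemma S3 f : S 3 f = f 0%N * 1 + f 1%N * 3 + f 2%N * 3 + f 3%N * 1.
Proof. by rewrite /S !big_ord_recr big_ord0 /= add0r. Qed.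

Definition Sx3 (f : nat -> int) := f 0%N * 1 + f 1%N * 3 + f 2%N * 3 + f 3%N * 1.

Lemma base0 : all (fun e => (Sx3 (fun m => ind (m %% 24 == e)%N) == x0`_e) &&
   (Sx3 (fun m => ind (m %% 24 == e)%N * (m %/ 24)%:Z) == y0`_e)) (iota 0 24).
Proof. vm_compute. reflexivity. Qed.

Lemma mulD (M A1 a1 A2 a2 : int) : (M %| A1 - a1)%Z -> (M %| A2 - a2)%Z ->
  (M %| A1 * A2 - a1 * a2)%Z.
Proof.
move=> h1 h2; have -> : A1 * A2 - a1 * a2 = (A1 - a1) * A2 + a1 * (A2 - a2) by ring.
by apply: rpredD; [apply: dvdz_mulr | apply: dvdz_mull].
Qed.

Lemma nth_nxt (F : nat -> int) e : (e < 24)%N ->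
  [seq F d | d <- iota 0 24]`_e = F e.
Proof. by move=> he; rewrite (nth_map 0%N) ?size_iota // nth_iota. Qed.

Lemma modred (x : int) : (64 %| x - (x %% 64)%Z)%Z.
Proof.
have -> : x - (x %% 64)%Z = (x %/ 64)%Z * 64 by rewrite {1}(divz_eq x 64); ring.
exact: dvdz_mull (dvdzz _).
Qed.

Lemma tab_ok j e : (e < 24)%N ->
  (64 %| Gf (3 * 2 ^ j) e - (tab j).1`_e)%Z /\ (64 %| Ff (3 * 2 ^ j) e - (tab j).2`_e)%Z.
Proof.
elim: j e => [|j IH] e he.
  have /andP [/eqP h1 /eqP h2] := allP base0 e (iota24 he).
  rewrite /Sx3 in h1 h2; cbv beta in h1; cbv beta in h2.
  rewrite expn0 muln1 /Gf /Ff !S3 h1 h2 /= !subrr.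
  by split; apply: rpred0.
have -> : (3 * 2 ^ j.+1 = 3 * 2 ^ j + 3 * 2 ^ j)%N by rewrite expnS; lia.
set n := (3 * 2 ^ j)%N.
rewrite /tab iterS -/(tab j) /= /nxtG /nxtF !nth_nxt //.
set x := (tab j).1; set y := (tab j).2.
have HX k : (k < 24)%N -> (64 %| Gf n k - x`_k)%Z by move=> hk; case: (IH k hk).
have HY k : (k < 24)%N -> (64 %| Ff n k - y`_k)%Z by move=> hk; case: (IH k hk).
split.
  rewrite dblG //.
  set s := sumL _.
  have -> : \sum_(e0 < 24) Gf n e0 * Gf n (dm e e0) - (s %% 64)%Z =
     (\sum_(e0 < 24) Gf n e0 * Gf n (dm e e0) - s) + (s - (s %% 64)%Z) by ring.
  apply: rpredD; last exact: modred.
  rewrite /s -(sumLE (fun k => x`_k * x`_(dm e k))) -sumrB.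
  by apply: rpred_sum => k _; apply: mulD; apply: HX; [exact: ltn_ord | exact: dm_lt].
rewrite dblF //.
set s := sumL _.
set T := \sum_(e0 < 24) _.
have -> : T - (s %% 64)%Z = (T - s) + (s - (s %% 64)%Z) by ring.
apply: rpredD; last exact: modred.
rewrite /T /s -(sumLE (fun k => y`_k * x`_(dm e k) + x`_k * y`_(dm e k)
        + ind (e < k)%N * x`_k * x`_(dm e k))) -sumrB.
have hk' k : (dm e k < 24)%N by exact: dm_lt.
apply: rpred_sum => k _.
have -> : Ff n k * Gf n (dm e k) + Gf n k * Ff n (dm e k) + ind (e < k)%N * Gf n k * Gf n (dm e k)
   - (y`_k * x`_(dm e k) + x`_k * y`_(dm e k) + ind (e < k)%N * x`_k * x`_(dm e k)) =
   (Ff n k * Gf n (dm e k) - y`_k * x`_(dm e k)) + (Gf n k * Ff n (dm e k) - x`_k * y`_(dm e k))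
   + ind (e < k)%N * (Gf n k * Gf n (dm e k) - x`_k * x`_(dm e k)) by ring.
apply: rpredD; [apply: rpredD|].
- by apply: mulD; [apply: HY; exact: ltn_ord | apply: HX].
- by apply: mulD; [apply: HX; exact: ltn_ord | apply: HY].
- by apply: dvdz_mull; apply: mulD; apply: HX; [exact: ltn_ord | exact: dm_lt].
Qed.

Lemma Inv_all w : InvG w (3 * 2 ^ (w + 5)) /\ InvF w (3 * 2 ^ (w + 5)).
Proof.
elim: w => [|w [IG IF]].
  have hB : all (chkB (tab 5)) (iota 0 24) := chkB_ok.
  rewrite add0n.
  split => d hd; rewrite /P expr0; have /andP [b1 b2] := allP hB d (iota24 hd);
    have [t1 t2] := tab_ok 5 hd.
    have -> : 3 * Gf (3 * 2 ^ 5) d - (g0 d + 8 * 1 * g1 d) =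
       3 * (Gf (3 * 2 ^ 5) d - (tab 5).1`_d) + (3 * (tab 5).1`_d - (g0 d + 8 * g1 d)) by ring.
    rewrite mulr1; apply: rpredD; [exact: dvdz_mull t1 | exact: b1].
  have -> : 9 * Ff (3 * 2 ^ 5) d - (Af d + 4 * 1 * Bf d) =
     9 * (Ff (3 * 2 ^ 5) d - (tab 5).2`_d) + (9 * (tab 5).2`_d - (Af d + 4 * Bf d)) by ring.
  rewrite mulr1; apply: rpredD; last exact: b2.
  apply: dvdz_mull; apply: (dvdz_trans _ t2); exact: isT.
have -> : (3 * 2 ^ (w.+1 + 5) = 3 * 2 ^ (w + 5) + 3 * 2 ^ (w + 5))%N by rewrite addSn expnS; lia.
by split; [apply: stepG | apply: stepF].
Qed.


Theorem theorem9 (u : nat) (hu : (5 <= u)%N) :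
  mx_congr (2%:Z ^+ u)
    (9%:Z *: Tmat 24 (3 * 2 ^ u))
    (T0 + (2%:Z ^+ (u - 3)) *: T1).
Proof.
have [w ->] : exists w, u = (w + 5)%N by exists (u - 5)%N; lia.
have [IG IF] := Inv_all w.
move=> r s.
set d := ((r + 24 - s) %% 24)%N.
have -> : (9%:Z *: Tmat 24 (3 * 2 ^ (w + 5))) r s =
  9 * (Ff (3 * 2 ^ (w + 5)) d + ind (r < s)%N * Gf (3 * 2 ^ (w + 5)) d) by rewrite mxE Tmat_entry.
rewrite !mxE.
apply/eqP; rewrite eqz_mod_dvd.
have -> : 2%:Z ^+ (w + 5) = 32 * P w by rewrite /P exprD mulrC.
have -> : 2%:Z ^+ (w + 5 - 3) = 4 * P w.
  by rewrite (_ : (w + 5 - 3 = w + 2)%N); [rewrite /P exprD mulrC | lia].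
set p := P w.
have hd : (d < 24)%N by rewrite /d ltn_pmod.
case: (leqP s r) => hsr.
  have hrs : (r < s)%N = false by rewrite ltnNge hsr.
  have -> : (r - s = d)%N by rewrite /d; move: (ltn_ord r) (ltn_ord s); lia.
  rewrite /ind mul0r addr0.
  have := IF d hd; rewrite /Af /Bf /AL /BL -/p.
  by [].
rewrite /ind mul1r.
have -> : ((s - r).-1 = 23 - d)%N by rewrite /d; move: (ltn_ord r) (ltn_ord s); lia.
have hd0 : (d != 0)%N by rewrite /d; move: (ltn_ord r) (ltn_ord s); lia.
have /orP [/eqP h0 | /andP [/eqP n1 n2]] := allP chkN_ok d (iota24 hd).
  by move: hd0; rewrite h0.
rewrite -/A2L -/B2L n1.
have -> : 9 * (Ff (3 * 2 ^ (w + 5)) d + Gf (3 * 2 ^ (w + 5)) d) -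
    (Af d + 3 * g0 d + 4 * p * nth 0 B2L (23 - d)) =
  (9 * Ff (3 * 2 ^ (w + 5)) d - (Af d + 4 * p * Bf d))
  + 3 * (3 * Gf (3 * 2 ^ (w + 5)) d - (g0 d + 8 * p * g1 d))
  - 4 * p * (nth 0 B2L (23 - d) - Bf d - 6 * g1 d) by ring.
apply: rpredB; first apply: rpredD.
- exact: IF.
- apply: dvdz_mull; apply: dvdz_trans (IG d hd).
  by rewrite (_ : 64 * p = 32 * p * 2); [apply: dvdz_mulr (dvdzz _) | ring].
- by rewrite (_ : 32 * p = 4 * p * 8); [apply: dvdz_mul (dvdzz _) n2 | ring].
Qed.
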